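(* Let $X$ be a locally compact, Hausdorff, second countable space. Then $(\Gamma(X),\tau_{hco})$ is a separable metrizable space.
   Context: $\Gamma(X)$ denotes the set of all homeomorphisms $f:\mathrm{dom}(f)\to\mathrm{im}(f)$ between open subsets of $X$ (including the empty function), an inverse semigroup under partial composition. For compact $K\subseteq X$ and open $V\subseteq X$ put $\langle K,V\rangle=\{f\in\Gamma(X): K\subseteq\mathrm{dom}(f),\ f(K)\subseteq V\}$ and $\langle K,V\rangle^{-1}=\{f\in\Gamma(X): K\subseteq\mathrm{im}(f),\ f^{-1}(K)\subseteq V\}$. $CL(X)$ is the set of closed subsets of $X$ (including $\emptyset$) with the Fell topology, generated by the subbasic sets $(X\setminus K)^+=\{A\in CL(X): A\subseteq X\setminus K\}$ ($K$ compact) and $V^-=\{A\in CL(X): A\cap V\neq\emptyset\}$ ($V$ nonempty open). Define $D,I:\Gamma(X)\to CL(X)$ by $D(f)=X\setminus\mathrm{dom}(f)$, $I(f)=X\setminus\mathrm{im}(f)$. The topology $\tau_{hco}$ on $\Gamma(X)$ is generated by all sets $\langle K,V\rangle$, $\langle K,V\rangle^{-1}$, $D^{-1}(W)$ and $I^{-1}(W)$, where $K$ is compact, $V$ open in $X$ and $W$ is Fell-open in $CL(X)$. *)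

(* Defs.v *)
From HB Require Import structures.
From mathcomp Require Import all_boot all_order all_algebra.
From mathcomp Require Import all_classical all_reals topology.
From mathcomp Require Import Rstruct.
Set Implicit Arguments. Unset Strict Implicit. Unset Printing Implicit Defensive.
Import Order.TTheory GRing.Theory Num.Theory.
Local Open Scope classical_set_scope.

Definition gen_open (T : Type) (S : set (set T)) : set (set T) :=
  fun U => forall O : set (set T),
    S `<=` O -> O setT ->
    (forall A B, O A -> O B -> O (A `&` B)) ->
    (forall F : set (set T), F `<=` O -> O (\bigcup_(A in F) A)) ->
    O U.

Definition separable_sp (T : Type) (opens : set (set T)) : Prop :=
  exists S : set T, countable S /\
    forall O, opens O -> O !=set0 -> O `&` S !=set0.

Definition metrizable_sp (T : Type) (opens : set (set T)) : Prop :=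
  exists d : T -> T -> Rdefinitions.R,
    [/\ (forall x, d x x = 0%R),
        (forall x y, d x y = 0%R -> x = y),
        (forall x y, d x y = d y x),
        (forall x y z, (d x z <= d x y + d y z)%R) &
        (forall U, opens U <->
           (forall x, U x -> exists2 e : Rdefinitions.R, (0 < e)%R &
               [set y | (d x y < e)%R] `<=` U))].

Section PartialHomeo.
Variable X : topologicalType.

(* G is the graph of a homeomorphism f : dom(f) -> im(f) between open
   subsets of X (the empty graph = the empty function). Since dom and im
   are open, continuity of f (resp. f^-1) as a map of subspaces amounts to:
   preimages of open sets of X are open in X. *)
Definition is_phomeo (G : set (X * X)) : Prop :=
  [/\ (forall x y y', G (x, y) -> G (x, y') -> y = y')
      /\ (forall x x' y, G (x, y) -> G (x', y) -> x = x'),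
      open [set x | exists y, G (x, y)],
      open [set y | exists x, G (x, y)],
      (forall U, open U -> open [set x | exists y, G (x, y) /\ U y]) &
      (forall U, open U -> open [set y | exists x, G (x, y) /\ U x])].

Record Gamma := MkGamma { graph : set (X * X); graph_phomeo : is_phomeo graph }.

Definition pdom (f : Gamma) : set X := [set x | exists y, graph f (x, y)].
Definition pim (f : Gamma) : set X := [set y | exists x, graph f (x, y)].
Definition pimage (f : Gamma) (K : set X) : set X :=
  [set y | exists2 x, K x & graph f (x, y)].
Definition ppreimage (f : Gamma) (K : set X) : set X :=
  [set x | exists2 y, K y & graph f (x, y)].

Lemma pdom_open (f : Gamma) : open (pdom f).
Proof. by case: f => G [] [? ?] ? ? ? ?. Qed.
Lemma pim_open (f : Gamma) : open (pim f).
Proof. by case: f => G [] [? ?] ? ? ? ?. Qed.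

Definition hco (K V : set X) : set Gamma :=
  [set f | K `<=` pdom f /\ pimage f K `<=` V].
Definition hco_inv (K V : set X) : set Gamma :=
  [set f | K `<=` pim f /\ ppreimage f K `<=` V].

Definition CL := {A : set X | closed A}.

Definition fell_subbase : set (set CL) :=
  [set W | (exists K : set X, compact K /\ W = [set A : CL | sval A `<=` ~` K])
        \/ (exists V : set X, [/\ open V, V !=set0 &
                       W = [set A : CL | sval A `&` V !=set0]])].

Definition fell_open : set (set CL) := gen_open fell_subbase.

Definition Dmap (f : Gamma) : CL := exist _ (~` pdom f) (open_closedC (pdom_open f)).
Definition Imap (f : Gamma) : CL := exist _ (~` pim f) (open_closedC (pim_open f)).

Definition hco_subbase : set (set Gamma) :=
  [set U | (exists K V, [/\ compact K, open V & U = hco K V])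
        \/ (exists K V, [/\ compact K, open V & U = hco_inv K V])
        \/ (exists W, fell_open W /\ U = Dmap @^-1` W)
        \/ (exists W, fell_open W /\ U = Imap @^-1` W)].

Definition tau_hco : set (set Gamma) := gen_open hco_subbase.

End PartialHomeo.

(* Main.v *)
Require Import Defs.
From HB Require Import structures.
From mathcomp Require Import all_boot all_order all_algebra.
From mathcomp Require Import all_classical all_reals topology.
From mathcomp Require Import Rstruct Rstruct_topology normedtype.
From mathcomp Require Import ring lra.
Set Implicit Arguments. Unset Strict Implicit. Unset Printing Implicit Defensive.
Import Order.TTheory GRing.Theory Num.Theory.
Local Open Scope classical_set_scope.
Local Open Scope ring_scope.
Local Notation RR := Rdefinitions.R.
Definition ptd (X : topologicalType) (x0 : X) : Type := X.
HB.instance Definition _ (X : topologicalType) (x0 : X) := Topological.copy (@ptd X x0) X.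
HB.instance Definition _ (X : topologicalType) (x0 : X) := isPointed.Build (@ptd X x0) x0.
Lemma cover_of_compact (X : topologicalType) (K : set X) : compact K -> cover_compact K.
Proof.
case: (pselect (exists x, K x)) => [[x0 _]|nK] cK.
  have := @compact_cover (@ptd X x0).
  move=> /(congr1 (fun f => f K)) h.
  by have : @cover_compact (@ptd X x0) K by rewrite -h.
move=> I D f _ _; exists (@finmap.fset0 I) => //.
by move=> x Kx; exfalso; apply: nK; exists x.
Qed.
Section GenOpen.
Variables (T : Type) (S : set (set T)).
Lemma go_sub U : S U -> gen_open S U.
Proof. by rewrite /gen_open => SU O SO _ _ _; exact: SO. Qed.
Lemma go_T : gen_open S setT.
Proof. by rewrite /gen_open => O _ OT _ _. Qed.
Lemma go_I A B : gen_open S A -> gen_open S B -> gen_open S (A `&` B).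
Proof. by move=> hA hB; rewrite /gen_open => O SO OT OI OU; apply: (OI); [exact: (hA O SO OT OI OU)|exact: (hB O SO OT OI OU)]. Qed.
Lemma go_U (F : set (set T)) : F `<=` gen_open S -> gen_open S (\bigcup_(A in F) A).
Proof. move=> hF; rewrite /gen_open => O SO OT OI OU; apply: (OU) => A /hF h; exact: (h O SO OT OI OU). Qed.
Lemma go_ind (P : set (set T)) : S `<=` P -> P setT ->
  (forall A B, P A -> P B -> P (A `&` B)) ->
  (forall F, F `<=` P -> P (\bigcup_(A in F) A)) -> gen_open S `<=` P.
Proof. by move=> a b c d U hU; exact: (hU P a b c d). Qed.
Lemma go_seq (J : eqType) (s : seq J) (F : J -> set T) :
  (forall j, j \in s -> gen_open S (F j)) ->
  gen_open S [set p | forall j, j \in s -> F j p].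
Proof.
elim: s => [|j s IH] H.
  have -> : [set p | forall j, j \in [::] -> F j p] = setT.
    by apply/seteqP; split=> // p _ j; rewrite in_nil.
  exact: go_T.
have -> : [set p | forall i, i \in j :: s -> F i p] =
    F j `&` [set p | forall i, i \in s -> F i p].
  apply/seteqP; split=> p.
    move=> h; split; first by apply: h; rewrite mem_head.
    by move=> i hi; apply: h; rewrite in_cons hi orbT.
  by move=> [h1 h2] i; rewrite in_cons => /orP [/eqP ->|/h2].
apply: go_I; first by apply: H; rewrite mem_head.
by apply: IH => i hi; apply: H; rewrite in_cons hi orbT.
Qed.
Lemma go_union (U : set T) :
  (forall p, U p -> exists2 O, gen_open S O & O p /\ O `<=` U) -> gen_open S U.
Proof.
move=> H; have -> : U = \bigcup_(A in [set O | gen_open S O /\ O `<=` U]) A.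
  apply/seteqP; split=> p.
    by move=> Up; have [O hO [Op OU]] := H p Up; exists O.
  by case=> O [_ OU] /OU.
by apply: go_U => O [].
Qed.
End GenOpen.

Section Metric.
Variables (T : Type) (S : set (set T)) (I : countType) (phi : I -> T -> RR).
Hypothesis phi01 : forall i p, 0 <= phi i p <= 1.
Hypothesis phicont : forall i p (e : RR), 0 < e -> exists O,
  [/\ gen_open S O, O p & forall q, O q -> `|phi i q - phi i p| < e].
Hypothesis phigen : forall U, S U -> forall p, U p ->
  exists (F : seq I) (del : RR), 0 < del /\
    forall q, (forall i, i \in F -> `|phi i q - phi i p| < del) -> U q.
Hypothesis phisep : forall p q, (forall i, phi i p = phi i q) -> p = q.

Definition wt (i : I) : RR := ((pickle i).+1%:R)^-1.
Definition term i p q := `|phi i p - phi i q| * wt i.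
Definition vals p q := [set r : RR | r = 0 \/ exists i, r = term i p q].
Definition dist p q := sup (vals p q).

Lemma wt_gt0 i : 0 < wt i.
Proof. by rewrite /wt invr_gt0 ltr0Sn. Qed.
Lemma wt_le1 i : wt i <= 1.
Proof. by rewrite /wt invf_le1 ?ltr0Sn // ler1n. Qed.
Lemma diff_le1 i p q : `|phi i p - phi i q| <= 1.
Proof.
have := phi01 i p; have := phi01 i q => /andP[? ?] /andP[? ?].
rewrite ler_norml; apply/andP; split; lra.
Qed.
Lemma term_ge0 i p q : 0 <= term i p q.
Proof. by rewrite /term mulr_ge0 // ltW // wt_gt0. Qed.
Lemma term_le_diff i p q : term i p q <= `|phi i p - phi i q|.
Proof. by rewrite /term ler_piMr // wt_le1. Qed.
Lemma term_le_wt i p q : term i p q <= wt i.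
Proof. by rewrite /term ler_piMl ?diff_le1 // ltW // wt_gt0. Qed.
Lemma has_sup_vals p q : has_sup (vals p q).
Proof.
split; first by exists 0; left.
exists 1 => r [->|[i ->]]; first by [].
exact: le_trans (term_le_wt _ _ _) (wt_le1 _).
Qed.
Lemma term_le_dist i p q : term i p q <= dist p q.
Proof. by apply: sup_upper_bound (has_sup_vals p q) _ _; right; exists i. Qed.
Lemma dist_ge0 p q : 0 <= dist p q.
Proof. by apply: sup_upper_bound (has_sup_vals p q) _ _; left. Qed.
Lemma dist_le p q c : 0 <= c -> (forall i, term i p q <= c) -> dist p q <= c.
Proof.
move=> c0 h; apply: ge_sup; first by exists 0; left.
by move=> r [->|[i ->]].
Qed.

Lemma wt_mono i (N : nat) : (N <= pickle i)%N -> wt i <= (N.+1%:R)^-1.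
Proof.
move=> hN; rewrite /wt lef_pV2 ?posrE ?ltr0Sn // ler_nat; by [].
Qed.

Lemma dist_close p q (N : nat) (e : RR) : 0 < e -> (N.+1%:R)^-1 < e ->
  (forall i, (pickle i < N)%N -> `|phi i q - phi i p| < e / 2) -> dist p q < e.
Proof.
move=> e0 hN h.
have : dist p q <= Num.max (e / 2) (N.+1%:R)^-1.
  apply: dist_le; first by rewrite le_max; apply/orP; left; lra.
  move=> i; rewrite le_max; apply/orP; case: (ltnP (pickle i) N) => hi.
    left; apply: le_trans (term_le_diff _ _ _) _; rewrite distrC; exact/ltW/h.
  by right; apply: le_trans (term_le_wt _ _ _) (wt_mono hi).
move=> /le_lt_trans; apply; rewrite gt_max hN andbT; lra.
Qed.

Lemma exists_N (e : RR) : 0 < e -> exists N : nat, (N.+1%:R)^-1 < e.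
Proof.
move=> e0; have he : 0 <= e^-1 by rewrite invr_ge0 ltW.
have h1 := @archi_boundP _ e^-1 he.
set k := Num.Def.archi_bound e^-1 in h1 *; exists k.
rewrite -[X in _ < X]invrK ltf_pV2 ?posrE ?ltr0Sn ?invr_gt0 //.
apply: lt_trans h1 _; by rewrite ltr_nat.
Qed.

Lemma dist_refl p : dist p p = 0.
Proof.
apply/eqP; rewrite eq_le dist_ge0 andbT; apply: dist_le => // i.
by rewrite /term subrr normr0 mul0r.
Qed.

Lemma dist_sym p q : dist p q = dist q p.
Proof.
rewrite /dist /vals; congr sup; apply/seteqP; split=> r [->|[i ->]];
  (try by left); right; exists i; by rewrite /term distrC.
Qed.

Lemma dist_tri p q r : dist p r <= dist p q + dist q r.
Proof.
apply: dist_le; first by rewrite addr_ge0 // dist_ge0.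
move=> i; apply: le_trans (lerD (term_le_dist i p q) (term_le_dist i q r)).
rewrite /term -mulrDl; apply: ler_wpM2r; [exact/ltW/wt_gt0|exact: ler_distD].
Qed.

Lemma dist_eq0 p q : dist p q = 0 -> p = q.
Proof.
move=> H; apply: phisep => i.
have h1 := term_le_dist i p q; rewrite H in h1.
have h0 := term_ge0 i p q.
have : term i p q = 0 by apply/eqP; rewrite eq_le h1 h0.
rewrite /term => /eqP; rewrite mulf_eq0 (gt_eqF (wt_gt0 i)) orbF normr_eq0 subr_eq0.
by move/eqP.
Qed.

Lemma metric_of_go U : gen_open S U ->
  forall x, U x -> exists2 e : RR, 0 < e & [set y | dist x y < e] `<=` U.
Proof.
move: U; apply: (go_ind (P := fun U => forall x, U x ->
  exists2 e : RR, 0 < e & [set y | dist x y < e] `<=` U)).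
- move=> U SU x Ux; have [F [del [d0 H]]] := phigen SU Ux.
  have [e [e0 he]] : exists e : RR, 0 < e /\ forall i, i \in F -> e <= del * wt i.
    elim: (F) => [|j F' [e [e0 he]]]; first by exists 1.
    exists (Num.min e (del * wt j)); split.
      by rewrite lt_min e0 mulr_gt0 // wt_gt0.
    move=> i; rewrite in_cons => /orP[/eqP->|/he hi]; rewrite ge_min.
      by rewrite lexx orbT.
    by rewrite hi.
  exists e => // y /= dy; apply: H => i /he hi.
  have := le_lt_trans (term_le_dist i x y) dy => /lt_le_trans /(_ hi).
  by rewrite /term ltr_pM2r ?wt_gt0 // distrC.
- by move=> x _; exists 1.
- move=> A B hA hB x [/hA [e1 e10 h1] /hB [e2 e20 h2]].
  exists (Num.min e1 e2); first by rewrite lt_min e10.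
  move=> y /= hy; split; [apply: h1|apply: h2]; rewrite /=;
    apply: lt_le_trans hy _; by rewrite ge_min lexx ?orbT.
- move=> F hF x [A FA Ax]; have [e e0 he] := hF A FA x Ax.
  by exists e => // y /he Ay; exists A.
Qed.

Lemma go_of_metric U :
  (forall x, U x -> exists2 e : RR, 0 < e & [set y | dist x y < e] `<=` U) ->
  gen_open S U.
Proof.
move=> H; apply: go_union => p Up.
have [e e0 he] := H p Up.
have [N hN] := exists_N e0.
pose s : seq I := pmap unpickle (iota 0 N).
have e20 : 0 < e / 2 by lra.
have [Of hOf] := choice (fun i => phicont i p e20).
exists [set q | forall i, i \in s -> Of i q].
  by apply: go_seq => i _; have [] := hOf i.
split; first by move=> i _; have [] := hOf i.
move=> q hq; apply: he; apply: (dist_close e0 hN) => i hi.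
have [_ _ ] := hOf i; apply; apply: hq.
rewrite mem_pmap; apply/mapP; exists (pickle i); last by rewrite pickleK.
by rewrite mem_iota add0n.
Qed.

Lemma metric_main : separable_sp (gen_open S) /\ metrizable_sp (gen_open S).
Proof.
split; last first.
  exists dist; split.
  - exact: dist_refl.
  - exact: dist_eq0.
  - exact: dist_sym.
  - exact: dist_tri.
  - by move=> U; split; [exact: metric_of_go|exact: go_of_metric].
case: (pselect (exists t : T, True)) => [[t0 _]|nT]; last first.
  by exists set0; split => // O _ [x _]; exfalso; apply: nT; exists x.
pose Bw (w : seq (I * rat * rat)) q :=
  forall t, t \in w -> ratr t.1.2 < phi t.1.1 q < ratr t.2.
pose c w := match pselect (exists q, Bw w q) with
  left h => projT1 (cid h) | right _ => t0 end.
have cP w q : Bw w q -> Bw w (c w).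
  rewrite /c; case: pselect => [h _|h Bq]; first exact: (projT2 (cid h)).
  by exfalso; apply: h; exists q.
exists (range c); split.
  exact: sub_countable (card_image_le c setT) (countableP _).
move=> O /metric_of_go hO [p Op].
have [e e0 he] := hO p Op.
have [N hN] := exists_N e0.
pose s : seq I := pmap unpickle (iota 0 N).
have e4 : 0 < e / 4 by lra.
have hab i : exists ab : rat * rat,
    phi i p - e / 4 < ratr ab.1 < phi i p /\ phi i p < ratr ab.2 < phi i p + e / 4.
  have [a ha] : exists a : rat, ratr a \in `](phi i p - e / 4), (phi i p)[.
    by apply: rat_in_itvoo; lra.
  have [b hb] : exists b : rat, ratr b \in `](phi i p), (phi i p + e / 4)[.
    by apply: rat_in_itvoo; lra.
  by exists (a, b); move: ha hb; rewrite !in_itv /=.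
have [ab hab'] := choice hab.
pose w := [seq (i, (ab i).1, (ab i).2) | i <- s].
have Bp : Bw w p.
  move=> t /mapP [i _ ->] /=; have [/andP[_ h1] /andP[h2 _]] := hab' i.
  by rewrite h1 h2.
have Bc := cP w p Bp.
exists (c w); split; last by exists w.
apply: he; apply: (dist_close e0 hN) => i hi /=.
have iw : (i, (ab i).1, (ab i).2) \in w.
  apply: map_f; rewrite mem_pmap; apply/mapP; exists (pickle i);
    last by rewrite pickleK.
  by rewrite mem_iota add0n.
have /andP [c1 c2] := Bc _ iw; move: c1 c2 => /= c1 c2.
have [/andP[h1 _] /andP[_ h2]] := hab' i.
rewrite ltr_norml; apply/andP; split; lra.
Qed.

End Metric.

Section XFacts.
Variable X : topologicalType.
Hypothesis lcX : locally_compact [set: X].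
Hypothesis hX : hausdorff_space X.

Lemma cpt_nbhd_in (x : X) (O : set X) : open O -> O x ->
  exists C, [/\ compact C, closed C, C `<=` O & nbhs x C].
Proof.
move=> oO Ox.
have [U nU [cU clU]] := lcX (I : [set: X] x).
have nU' : nbhs x U.
  have nU2 : nbhs x [set y | [set: X] y -> U y] := nU.
  by apply: (filterS _ nU2) => y; apply.
have reg := compact_regular hX cU nU'.
have nO : nbhs x O by apply: open_nbhs_nbhs.
have [N nN cNO] := reg O nO.
exists (closure (N `&` U)); split.
- apply: (@subclosed_compact _ (closure (N `&` U)) U _ cU);
    last by rewrite [X in _ `<=` X](closure_id U).1 //; apply: closureS => y [].
  exact: closed_closure.
- exact: closed_closure.
- by apply: subset_trans cNO; apply: closureS => y [].
- by apply: filterS (@subset_closure _ _) _; apply: filterI.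
Qed.

Variable e : nat -> set X.
Hypothesis e_open : forall n, open (e n).
Hypothesis e_basis : forall x N, nbhs x N -> exists n, e n x /\ e n `<=` N.

Definition Qgood i j (g : X -> RR) := [/\ continuous g, (forall x, 0 <= g x <= 1),
  (forall x, e i x -> g x = 1), (forall x, ~ e j x -> g x = 0) &
  compact (closure (e j))].

Definition gij i j : X -> RR :=
  match pselect (exists g, Qgood i j g) with
  | left h => projT1 (cid h) | right _ => fun _ => 0 end.

Lemma gij_Q i j : (exists g, Qgood i j g) -> Qgood i j (gij i j).
Proof.
rewrite /gij; case: pselect => [h _|h h']; first exact: (projT2 (cid h)).
by exfalso; apply: h.
Qed.

Lemma gij_cont i j : continuous (gij i j).
Proof.
case: (pselect (exists g, Qgood i j g)) => [/gij_Q [] //|h].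
rewrite /gij; case: pselect => [h'|_]; first by exfalso; apply: h.
by move=> x; exact: cvg_cst.
Qed.

Lemma gij01 i j x : 0 <= gij i j x <= 1.
Proof.
case: (pselect (exists g, Qgood i j g)) => [/gij_Q [] //|h].
rewrite /gij; case: pselect => [h'|_]; first by exfalso; apply: h.
by rewrite lexx ler01.
Qed.

Lemma closed_ge_fun (g : X -> RR) (r : RR) : continuous g -> closed [set x | r <= g x].
Proof.
move=> cg; have -> : [set x | r <= g x] = g @^-1` [set y | r <= y] by [].
by apply: preimage_closed; [move=> x _; exact: cg| exact: closed_ge].
Qed.

Lemma gij_cpt i j (r : RR) : 0 < r -> compact [set x | r <= gij i j x].
Proof.
move=> r0; case: (pselect (exists g, Qgood i j g)) => [/gij_Q Q|h].
  have [cg _ _ g0 cpt] := Q.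
  have clr := closed_ge_fun (r:=r) cg.
  apply: (subclosed_compact clr cpt) => x /= rx.
  apply: subset_closure; apply/not_notP => nx.
  by move: rx; rewrite g0 // leNgt r0.
have -> : [set x | r <= gij i j x] = set0.
  apply/seteqP; split => // x /=; rewrite /gij; case: pselect => [h'|_].
    by exfalso; apply: h.
  by rewrite leNgt r0.
exact: compact0.
Qed.

Lemma Lpair (x : X) (O : set X) : open O -> O x ->
  exists i j, [/\ e i x, closure (e j) `<=` O, compact (closure (e j)) &
    exists g, Qgood i j g].
Proof.
move=> oO Ox; have [C [cC clC CO nC]] := cpt_nbhd_in oO Ox.
have [j [ejx ejC]] := e_basis nC.
have clj : closure (e j) `<=` C.
  by rewrite [X in _ `<=` X](closure_id C).1 //; apply: closureS.
have cptj : compact (closure (e j)).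
  exact: (subclosed_compact (@closed_closure _ _) cC clj).
have crX := @locally_compact_completely_regular X RR lcX hX.
have [f [cf rf f0 f1]] : exists f : X -> RR, [/\ continuous f,
    range f `<=` `[0, 1], f @` [set x] `<=` [set 0] & f @` (~` e j) `<=` [set 1]].
  apply/uniform_separatorP; apply: crX; first exact: open_closedC.
  by move=> /(_ ejx).
have fx0 : f x = 0 by apply: f0; exists x.
have f01 y : 0 <= f y <= 1.
  have /rf : range f (f y) by exists y.
  by rewrite /= in_itv /=.
have f1' y : ~ e j y -> f y = 1.
  by move=> hy; have : [set 1] (f y) by apply: f1; exists y.
have oW : open (f @^-1` [set r | r < 1 / 2]).
  by apply: open_comp; [move=> y _; exact: cf| exact: open_lt].
have nW : nbhs x (f @^-1` [set r | r < 1 / 2]).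
  by apply: open_nbhs_nbhs; split => //=; rewrite fx0; lra.
have [i [eix eiW]] := e_basis nW.
exists i, j; split => //; first exact: subset_trans clj CO.
exists (fun y => Num.min 1 (2 * (1 - f y))); split => //.
- move=> y; apply: (@continuous_min RR X (fun _ => 1) (fun y => 2 * (1 - f y))).
    exact: cvg_cst.
  apply: continuousM; first exact: cvg_cst.
  exact: (@continuousB RR RR^o X (fun _ => 1) f y (cvg_cst _) (cf y)).
- move=> y; have /andP [a b] := f01 y.
  apply/andP; split; first by rewrite le_min ler01 /=; lra.
  by rewrite ge_min lexx.
- move=> y /eiW /= hy; have /andP [a b] := f01 y.
  by apply/min_idPl; lra.
- move=> y /f1' ->; rewrite subrr mulr0; apply/min_idPr; exact: ler01.
Qed.

Definition gs (s : seq (nat * nat)) : X -> RR :=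
  foldr (fun p acc x => Num.max (gij p.1 p.2 x) (acc x)) (fun _ => 0) s.

Lemma gs_cont s : continuous (gs s).
Proof.
elim: s => [|p s IH] x /=; first exact: cvg_cst.
apply: (@continuous_max RR X (gij p.1 p.2) (gs s) x); [exact: gij_cont| exact: IH].
Qed.

Lemma gs01 s x : 0 <= gs s x <= 1.
Proof.
elim: s => [|p s IH] /=; first by rewrite lexx ler01.
have /andP [a b] := gij01 p.1 p.2 x; move: IH => /andP [c d].
by apply/andP; split; [rewrite le_max a | rewrite ge_max b d].
Qed.

Lemma gs_ge p s x : p \in s -> gij p.1 p.2 x <= gs s x.
Proof.
elim: s => [|q s IH] //=; rewrite in_cons => /orP [/eqP ->|/IH h].
  by rewrite le_max lexx.
by rewrite le_max h orbT.
Qed.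

Lemma gs_pos s x : 0 < gs s x -> exists2 p, p \in s & 0 < gij p.1 p.2 x.
Proof.
elim: s => [|q s IH] /=; first by rewrite ltxx.
rewrite lt_max => /orP [h|/IH [p ps hp]].
  by exists q => //; rewrite mem_head.
by exists p => //; rewrite in_cons ps orbT.
Qed.

Lemma gs_cpt s (r : RR) : 0 < r -> compact [set x | r <= gs s x].
Proof.
move=> r0; elim: s => [|p s IH] /=.
  have -> : [set x | r <= (fun _ : X => (0 : RR)) x] = set0.
    by apply/seteqP; split => // x /=; rewrite leNgt r0.
  exact: compact0.
have -> : [set x | r <= Num.max (gij p.1 p.2 x) (gs s x)] =
   [set x | r <= gij p.1 p.2 x] `|` [set x | r <= gs s x].
  by apply/seteqP; split => x /=; rewrite le_max => /orP.
by apply: compactU => //; exact: gij_cpt.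
Qed.

Lemma bigU_in (J : eqType) (s : seq J) (P : pred J) (F : J -> set X) j y :
  j \in s -> P j -> F j y -> (\big[setU/set0]_(i <- s | P i) F i) y.
Proof.
elim: s => [|k s IH] //=; rewrite in_cons big_cons => /orP [/eqP <-|js] Pj Fy.
  by rewrite Pj; left.
by case: (P k); [right|]; apply: IH.
Qed.

Lemma bigU_sub (J : eqType) (s : seq J) (P : pred J) (F : J -> set X) (O : set X) :
  (forall j, P j -> F j `<=` O) -> (\big[setU/set0]_(i <- s | P i) F i) `<=` O.
Proof.
move=> h; elim: s => [|k s IH]; first by rewrite big_nil.
rewrite big_cons; case: ifP => Pk //.
by move=> y [/(h _ Pk)|/IH].
Qed.

Lemma cover_lemma (K O : set X) : compact K -> open O -> K `<=` O ->
  exists s L, [/\ (forall x, K x -> gs s x = 1), compact L, L `<=` O &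
    (forall x, 0 < gs s x -> L x)].
Proof.
move=> cK oO KO.
have H x : exists ij : nat * nat, K x -> [/\ e ij.1 x, closure (e ij.2) `<=` O,
    compact (closure (e ij.2)) & exists g, Qgood ij.1 ij.2 g].
  case: (pselect (K x)) => Kx; last by exists (0, 0)%N.
  by have [i [j h]] := Lpair oO (KO _ Kx); exists (i, j).
have [ij hij] := choice H.
have cK' := cover_of_compact cK.
have hij1 x : K x -> e (ij x).1 x by move=> Kx; case: (hij x Kx).
have [D' D'K KD'] := cK' X K (fun x => e (ij x).1) (fun x _ => e_open _)
  (fun x Kx => ex_intro2 _ _ x Kx (hij1 x Kx)).
exists [seq ij x | x <- finmap.enum_fset D'].
exists (\big[setU/set0]_(x <- finmap.enum_fset D' | `[< K x >]) closure (e (ij x).2)); split.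
- move=> x Kx; have [x' x'D ex] := KD' x Kx.
  have Kx' : K x' by rewrite -in_setE; apply: D'K.
  have [_ _ _ Q] := hij x' Kx'.
  have [_ _ g1 _ _] := gij_Q Q.
  apply/eqP; rewrite eq_le; have /andP [_ ->] := gs01 [seq ij x0 | x0 <- finmap.enum_fset D'] x.
  rewrite /= -(g1 x ex); apply: gs_ge; exact: map_f.
- by apply: bigsetU_compact => x /asboolP Kx; have [] := hij x Kx.
- by apply: bigU_sub => x /asboolP Kx; have [] := hij x Kx.
- move=> y /gs_pos [p /mapP [x' x'D ->] hp].
  have Kx' : K x' by rewrite -in_setE; apply: D'K.
  have [_ _ _ Q] := hij x' Kx'.
  have [_ _ _ g0 _] := gij_Q Q.
  apply: (bigU_in x'D); first exact/asboolP.
  apply: subset_closure; apply/not_notP => ne.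
  by move: hp; rewrite g0 // ltxx.
Qed.

End XFacts.

Lemma compactP_cover (X : topologicalType) (K : set X) : compact K <-> cover_compact K.
Proof.
split; first exact: cover_of_compact.
case: (pselect (exists x, K x)) => [[x0 _]|nK] cK.
  have := @compact_cover (@ptd X x0).
  move=> /(congr1 (fun f => f K)) h.
  by have : @compact (@ptd X x0) K by rewrite h.
have -> : K = set0 by apply/seteqP; split => // x Kx; apply: nK; exists x.
exact: compact0.
Qed.

Section GammaBasics.
Variable X : topologicalType.
Implicit Types (f p q : Gamma X).

Lemma gfun f x y y' : graph f (x, y) -> graph f (x, y') -> y = y'.
Proof. by case: f => G [] [h _] _ _ _ _ /=; apply: h. Qed.

Lemma gpre_open f (V : set X) : open V -> open [set x | exists y, graph f (x, y) /\ V y].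
Proof. by case: f => G [] _ _ _ h _ /=; apply: h. Qed.

Lemma is_phomeo_swap (G : set (X * X)) : is_phomeo G -> is_phomeo [set p | G (p.2, p.1)].
Proof.
case=> [[h1 h2] o1 o2 c1 c2]; split => //.
by split => [x y y' a b|x x' y a b]; [apply: h2 a b|apply: h1 a b].
Qed.

Definition ginv f : Gamma X := MkGamma (is_phomeo_swap (graph_phomeo f)).

Lemma Dmap_ginv f : Dmap (ginv f) = Imap f.
Proof. by rewrite /Dmap /Imap; congr exist; exact: Prop_irrelevance. Qed.
Lemma Imap_ginv f : Imap (ginv f) = Dmap f.
Proof. by rewrite /Dmap /Imap; congr exist; exact: Prop_irrelevance. Qed.

Lemma ginv_open O : @tau_hco X O -> @tau_hco X (ginv @^-1` O).
Proof.
move: O; apply: (go_ind (P := fun O => @tau_hco X (ginv @^-1` O))).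
- move=> U [[K [V [cK oV ->]]]|[[K [V [cK oV ->]]]|[[W [fW ->]]|[W [fW ->]]]]];
    apply: go_sub.
  + by right; left; exists K, V.
  + by left; exists K, V.
  + right; right; right; exists W; split => //.
    by apply/seteqP; split => f /=; rewrite Dmap_ginv.
  + right; right; left; exists W; split => //.
    by apply/seteqP; split => f /=; rewrite Imap_ginv.
- exact: go_T.
- by move=> A B hA hB; exact: go_I.
- move=> F hF; have -> : ginv @^-1` (\bigcup_(A in F) A) =
      \bigcup_(A in [set ginv @^-1` B | B in F]) A.
    apply/seteqP; split => f.
      by case=> A FA Af; exists (ginv @^-1` A) => //; exists A.
    by case=> _ [A FA <-] Af; exists A.
  by apply: go_U => _ [A FA <-]; apply: hF.
Qed.

Lemma pimage_compact f (L : set X) : compact L -> L `<=` pdom f -> compact (pimage f L).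
Proof.
move=> /compactP_cover cL Ld; apply/compactP_cover => I D F oF cov.
pose F' i := [set x | exists y, graph f (x, y) /\ F i y].
have oF' i : D i -> open (F' i) by move=> Di; apply: gpre_open; apply: oF.
have cov' : L `<=` cover D F'.
  move=> x Lx; have [y gxy] := Ld x Lx.
  have [i Di Fiy] := cov y (ex_intro2 _ _ x Lx gxy).
  by exists i => //; exists y.
have [D' D'D LD'] := cL I D F' oF' cov'.
exists D' => // y [x Lx gxy].
have [i D'i [y' [gxy' Fy']]] := LD' x Lx.
by exists i => //; rewrite (gfun gxy gxy').
Qed.

End GammaBasics.

Section PsiSec.
Variable X : topologicalType.
Hypothesis lcX : locally_compact [set: X].
Hypothesis hX : hausdorff_space X.
Variables g h : X -> RR.
Hypothesis g01 : forall x, 0 <= g x <= 1.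
Hypothesis h01 : forall x, 0 <= h x <= 1.
Implicit Types (f p q : Gamma X).

Definition vals_psi f : set RR := [set r | r = 0 \/
  (exists x, ~ pdom f x /\ r = g x) \/
  (exists x y, graph f (x, y) /\ r = g x * (1 - h y))].
Definition Psi f := sup (vals_psi f).

Lemma prod_le1 x y : 0 <= g x * (1 - h y) <= g x.
Proof.
have /andP [a b] := g01 x; have /andP [c d] := h01 y.
apply/andP; split; first by rewrite mulr_ge0 // subr_ge0.
by rewrite ler_piMr // lerBlDr lerDl.
Qed.

Lemma has_sup_psi f : has_sup (vals_psi f).
Proof.
split; first by exists 0; left.
exists 1 => r [->|[[x [_ ->]]|[x [y [_ ->]]]]] //; first by have /andP [] := g01 x.
have /andP [_ b] := prod_le1 x y; apply: le_trans b _; by have /andP [] := g01 x.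
Qed.

Lemma Psi_ge0 f : 0 <= Psi f.
Proof. by apply: sup_upper_bound (has_sup_psi f) _ _; left. Qed.
Lemma Psi_ge_out f x : ~ pdom f x -> g x <= Psi f.
Proof. by move=> nx; apply: sup_upper_bound (has_sup_psi f) _ _; right; left; exists x. Qed.
Lemma Psi_ge_in f x y : graph f (x, y) -> g x * (1 - h y) <= Psi f.
Proof. by move=> gxy; apply: sup_upper_bound (has_sup_psi f) _ _; right; right; exists x, y. Qed.
Lemma Psi_le f c : 0 <= c -> (forall x, ~ pdom f x -> g x <= c) ->
  (forall x y, graph f (x, y) -> g x * (1 - h y) <= c) -> Psi f <= c.
Proof.
move=> c0 h1 h2; apply: ge_sup; first by exists 0; left.
by move=> r [->|[[x [nx ->]]|[x [y [gxy ->]]]]]; [|apply: h1|apply: h2].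
Qed.
Lemma Psi_le1 f : Psi f <= 1.
Proof.
apply: Psi_le => //; first by move=> x _; have /andP [] := g01 x.
move=> x y _; have /andP [_ b] := prod_le1 x y; apply: le_trans b _.
by have /andP [] := g01 x.
Qed.

Lemma Psi_gt f (a : RR) : 0 <= a -> a < Psi f ->
  (exists x, ~ pdom f x /\ a < g x) \/
  (exists x y, graph f (x, y) /\ a < g x * (1 - h y)).
Proof.
move=> a0 aP; apply: contrapT => nH.
suff : Psi f <= a by rewrite leNgt aP.
apply: Psi_le => //.
  move=> x nx; rewrite leNgt; apply/negP => ax; apply: nH; left; by exists x.
move=> x y gxy; rewrite leNgt; apply/negP => ax; apply: nH; right; by exists x, y.
Qed.

Hypothesis gc : continuous g.
Hypothesis hc : continuous h.
Hypothesis gcpt : forall r : RR, 0 < r -> compact [set x | r <= g x].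

Lemma cont_gh (c : RR) : continuous (fun z => c * (1 - h z)).
Proof.
move=> z; apply: (@continuousM RR X (fun _ => c) (fun z => 1 - h z) z); first exact: cvg_cst.
apply: (@continuousD RR RR^o X (fun _ => 1) (fun z => - h z) z); first exact: cvg_cst.
apply: (@continuousN RR RR^o X h z); exact: hc.
Qed.

Lemma Psi_lower f0 (a : RR) : a < Psi f0 ->
  exists O, [/\ @tau_hco X O, O f0 & forall f, O f -> a < Psi f].
Proof.
move=> aP; case: (ltP a 0) => a0.
  exists setT; split => //.
  by move=> f _; apply: lt_le_trans a0 (Psi_ge0 f).
case: (Psi_gt a0 aP) => [[x [nx ax]]|[x [y [gxy ax]]]].
- pose V := [set z | a < g z].
  have oV : open V.
    have -> : V = g @^-1` [set r | a < r] by [].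
    by apply: open_comp; [move=> z _; exact: gc|exact: open_gt].
  pose W := [set A : CL X | sval A `&` V !=set0].
  exists (@Dmap X @^-1` W); split.
  + apply: (@go_sub _ (@hco_subbase X)); right; right; left; exists W; split => //.
    apply: go_sub; right; exists V; split => //; by exists x.
  + by exists x.
  + by move=> f [z [nz Vz]]; apply: lt_le_trans Vz (Psi_ge_out nz).
- pose V := [set z | a < g x * (1 - h z)].
  have oV : open V.
    have -> : V = (fun z => g x * (1 - h z)) @^-1` [set r | a < r] by [].
    by apply: open_comp; [move=> z _; exact: cont_gh|exact: open_gt].
  exists (hco [set x] V); split.
  + apply: (@go_sub _ (@hco_subbase X)); left; exists [set x], V; split => //; exact: compact_set1.
  + split; first by move=> _ ->; exists y.
    by move=> z [_ -> gxz]; rewrite /V /= -(gfun gxy gxz).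
  + move=> f [dx im]; have [y' gxy'] := dx x erefl.
    have Vy' : V y' by apply: im; exists x.
    exact: lt_le_trans Vy' (Psi_ge_in gxy').
Qed.

Lemma Psi_upper f0 (b : RR) : Psi f0 < b ->
  exists O, [/\ @tau_hco X O, O f0 & forall f, O f -> Psi f < b].
Proof.
move=> Pb; pose r := (Psi f0 + b) / 2.
have P0 := Psi_ge0 f0.
have rP : Psi f0 < r by rewrite /r; lra.
have rb : r < b by rewrite /r; lra.
have r0 : 0 < r by lra.
pose K' := [set x | r <= g x].
have cK' : compact K' := gcpt r0.
have K'dom x : K' x -> pdom f0 x.
  move=> Kx; apply: contrapT => nx; have := Psi_ge_out nx.
  by move=> /(le_trans Kx); rewrite leNgt rP.
have H x : exists NV : set X * set X, K' x -> [/\ compact NV.1, open NV.2, nbhs x NV.1,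
   hco NV.1 NV.2 f0 & forall x' y', NV.1 x' -> NV.2 y' -> g x' * (1 - h y') < r].
  case: (pselect (K' x)) => Kx; last by exists (set0, set0).
  have [y gxy] := K'dom x Kx.
  pose c := g x * (1 - h y).
  have cP : c <= Psi f0 := Psi_ge_in gxy.
  pose eps := Num.min 1 ((r - c) / 4).
  have eps0 : 0 < eps by rewrite lt_min ltr01 /=; lra.
  have eps1 : eps <= 1 by rewrite ge_min lexx.
  have eps2 : eps <= (r - c) / 4 by rewrite ge_min lexx orbT.
  pose V := [set y' | h y - eps < h y'].
  have oV : open V.
    have -> : V = h @^-1` [set r | h y - eps < r] by [].
    by apply: open_comp; [move=> z _; exact: hc|exact: open_gt].
  pose A := [set x' | g x' < g x + eps] `&` [set x' | exists y', graph f0 (x', y') /\ V y'].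
  have oA : open A.
    apply: openI; last exact: gpre_open.
    have -> : [set x' | g x' < g x + eps] = g @^-1` [set r | r < g x + eps] by [].
    by apply: open_comp; [move=> z _; exact: gc|exact: open_lt].
  have Ax : A x by split; [rewrite /=; lra|exists y; split => //; rewrite /V /=; lra].
  have [C [cC _ CA nC]] := cpt_nbhd_in lcX hX oA Ax.
  exists (C, V) => _; split => //=.
  + split; first by move=> z /CA [_ [y' [g' _]]]; exists y'.
    move=> z [x' Cx' gz]; have [_ [y' [g' Vy']]] := CA _ Cx'.
    by rewrite (gfun gz g').
  + move=> x' y' Cx' Vy'; have [/= gx' _] := CA _ Cx'.
    move: Vy'; rewrite /V /= => Vy'.
    have /andP [a1 a2] := g01 x; have /andP [b1 b2] := g01 x'.
    have /andP [c1 c2] := h01 y; have /andP [d1 d2] := h01 y'.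
    have e1 : g x' * (1 - h y') <= (g x + eps) * (1 - h y').
      by rewrite ler_wpM2r ?subr_ge0 // ltW.
    have e2 : (g x + eps) * (1 - h y') <= (g x + eps) * (1 - h y + eps).
      rewrite ler_wpM2l //; first lra.
      lra.
    apply: le_lt_trans e1 _; apply: le_lt_trans e2 _.
    have : (g x + eps) * (1 - h y + eps) = c + eps * (g x + (1 - h y)) + eps * eps.
      by rewrite /c; ring.
    move=> ->.
    have : eps * (g x + (1 - h y)) <= eps * 2 by apply: ler_wpM2l; [exact: ltW|lra].
    have : eps * eps <= eps * 1 by apply: ler_wpM2l; [exact: ltW|lra].
    lra.
have [NV hNV] := choice H.
have cov : K' `<=` cover K' (fun x => interior (NV x).1).
  by move=> x Kx; exists x => //; have [_ _ nx _ _] := hNV x Kx.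
have [D' D'K KD'] := cover_of_compact cK' (fun x _ => @open_interior _ _) cov.
have D'K' x : x \in finmap.enum_fset D' -> K' x.
  by move=> xD; rewrite -in_setE; apply: D'K.
exists [set f | forall x, x \in finmap.enum_fset D' -> hco (NV x).1 (NV x).2 f].
split.
- apply: (@go_seq _ (@hco_subbase X)) => x /D'K' Kx; have [cN oV _ _ _] := hNV x Kx.
  by apply: (@go_sub _ (@hco_subbase X)); left; exists (NV x).1, (NV x).2.
- by move=> x /D'K' Kx; have [] := hNV x Kx.
- move=> f hf; apply: le_lt_trans rb; apply: Psi_le; first exact: ltW.
  + move=> x nx; rewrite leNgt; apply/negP => gx.
    have [x' x'D /interior_subset Nx] := KD' x (ltW gx).
    by have [dom _] := hf x' x'D; apply: nx; apply: dom.
  + move=> x y gxy; case: (ltP (g x) r) => gx.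
      by have /andP [_ b'] := prod_le1 x y; apply: le_trans b' (ltW gx).
    have [x' x'D /interior_subset Nx] := KD' x gx.
    have [_ im] := hf x' x'D.
    have Vy : (NV x').2 y by apply: im; exists x.
    have [_ _ _ _ bd] := hNV x' (D'K' x' x'D).
    exact/ltW/bd.
Qed.

Lemma Psi_cont f0 (eps : RR) : 0 < eps ->
  exists O, [/\ @tau_hco X O, O f0 & forall f, O f -> `|Psi f - Psi f0| < eps].
Proof.
move=> e0.
have [O1 [t1 o1 h1]] := @Psi_lower f0 (Psi f0 - eps) ltac:(lra).
have [O2 [t2 o2 h2]] := @Psi_upper f0 (Psi f0 + eps) ltac:(lra).
exists (O1 `&` O2); split; [exact: (@go_I _ (@hco_subbase X))|by []|].
move=> f [/h1 a /h2 b]; rewrite ltr_norml; apply/andP; split; lra.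
Qed.

End PsiSec.

Section GammaGen.
Variable X : topologicalType.
Hypothesis lcX : locally_compact [set: X].
Hypothesis hX : hausdorff_space X.
Variable e : nat -> set X.
Hypothesis e_open : forall n, open (e n).
Hypothesis e_basis : forall x N, nbhs x N -> exists n, e n x /\ e n `<=` N.
Implicit Types (f p q : Gamma X).

Definition Jt := (seq (nat * nat) * option (seq (nat * nat)))%type.
Definition hof (o : option (seq (nat * nat))) : X -> RR :=
  match o with None => fun _ => 1 | Some t => gs e t end.
Definition psi (j : Jt) f := Psi (gs e j.1) (hof j.2) f.

Lemma hof01 o x : 0 <= hof o x <= 1.
Proof. by case: o => [t|] /=; [exact: gs01|rewrite ler01 lexx]. Qed.
Lemma hof_cont o : continuous (hof o).
Proof. by case: o => [t|] /=; [exact: gs_cont|move=> x; exact: cvg_cst]. Qed.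

Lemma psi01 j f : 0 <= psi j f <= 1.
Proof.
have g1 := gs01 e j.1; have h1 := hof01 j.2.
by apply/andP; split; [apply: Psi_ge0|apply: Psi_le1].
Qed.

Lemma psi_cont j f0 (eps : RR) : 0 < eps ->
  exists O, [/\ @tau_hco X O, O f0 & forall f, O f -> `|psi j f - psi j f0| < eps].
Proof.
move=> e0; rewrite /psi; have := (Psi_cont lcX hX (gs01 e j.1) (hof01 j.2) (@gs_cont _ e j.1)
  (@hof_cont j.2) _ f0 e0); apply.
by move=> r r0; exact: gs_cpt.
Qed.

Definition gen_at (U : set (Gamma X)) p := exists (F : seq Jt) (del : RR), 0 < del /\
  forall q, (forall j, j \in F -> `|psi j q - psi j p| < del) -> U q.

Lemma gen_hco (K V : set X) p : compact K -> open V -> hco K V p -> gen_at (hco K V) p.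
Proof.
move=> cK oV [Kd pKV].
pose O := [set x | exists y, graph p (x, y) /\ V y].
have oO : open O := gpre_open p oV.
have KO : K `<=` O.
  move=> x Kx; have [y gxy] := Kd x Kx; exists y; split => //.
  by apply: pKV; exists x.
have [s [L [gs1 cL LO Lsup]]] := cover_lemma lcX hX e_open e_basis cK oO KO.
have Ld : L `<=` pdom p by move=> x /LO [y [gxy _]]; exists y.
have cL' := pimage_compact cL Ld.
have L'V : pimage p L `<=` V.
  move=> y [x /LO [y' [gxy' Vy']] gxy]; by rewrite (gfun gxy gxy').
have [t [L2 [gt1 cL2 L2V L2sup]]] := cover_lemma lcX hX e_open e_basis cL' oV L'V.
pose j : Jt := (s, Some t).
have gs0 := gs01 e s; have gt0 := gs01 e t.
have psip : psi j p = 0.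
  apply/eqP; rewrite eq_le; apply/andP; split; last first.
    by apply: Psi_ge0; [exact: gs01|exact: hof01].
  apply: Psi_le => //.
    move=> x nx; rewrite leNgt; apply/negP => /Lsup /LO [y [gxy _]].
    by apply: nx; exists y.
  move=> x y gxy /=; case: (ltP 0 (gs e s x)) => gx.
    have Lx := Lsup x gx.
    by rewrite gt1 ?subrr ?mulr0 //; exists x.
  have -> : gs e s x = 0 by apply/eqP; rewrite eq_le gx; have /andP [] := gs0 x.
  by rewrite mul0r.
exists [:: j], 1; split => // q hq.
have := hq j (mem_head _ _); rewrite psip subr0 => hq1.
have hq2 : psi j q < 1 by apply: le_lt_trans hq1; exact: ler_norm.
split.
  move=> x Kx; apply: contrapT => nx.
  have := Psi_ge_out (gs01 e s) (hof01 (Some t)) nx.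
  by rewrite gs1 // => /(lt_le_trans hq2); rewrite ltxx.
move=> y [x Kx gxy].
have := Psi_ge_in (gs01 e s) (hof01 (Some t)) gxy; rewrite gs1 // mul1r /= => h1.
have : 0 < gs e t y.
  have h2 : 1 - gs e t y <= psi j q by [].
  lra.
by move=> /L2sup /L2V.
Qed.


Lemma gen_at_I U1 U2 p : gen_at U1 p -> gen_at U2 p -> gen_at (U1 `&` U2) p.
Proof.
move=> [F1 [d1 [d10 h1]]] [F2 [d2 [d20 h2]]].
exists (F1 ++ F2), (Num.min d1 d2); split; first by rewrite lt_min d10.
move=> q hq; split; [apply: h1|apply: h2] => j hj;
  (apply: lt_le_trans (hq j _) _; [by rewrite mem_cat hj ?orbT|by rewrite ge_min lexx ?orbT]).
Qed.

Lemma gen_fell (W : set (CL X)) : fell_open W ->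
  forall p, W (Dmap p) -> gen_at (@Dmap X @^-1` W) p.
Proof.
move: W; apply: (go_ind (P := fun W => forall p, W (Dmap p) -> gen_at (@Dmap X @^-1` W) p)).
- move=> W [[K [cK ->]]|[V [oV [x0 V0] ->]]] p /=.
  + move=> hp.
    have hK : hco K setT p.
      split => // x Kx; apply: contrapT => nx; exact: (hp x nx Kx).
    have [F [del [d0 H]]] := gen_hco cK openT hK.
    exists F, del; split => // q /H [Kq _] x /= nx Kx; apply: nx; exact: Kq.
  + move=> [x [nx Vx]].
    have [i [j [eix clV cj Qex]]] := Lpair lcX hX e_open e_basis oV Vx.
    have [_ _ g1 g0 _] := gij_Q Qex.
    pose jj : Jt := ([:: (i, j)], None).
    have hg1 := gs01 e [:: (i, j)]; have hh1 := hof01 None.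
    have psip : psi jj p = 1.
      apply/eqP; rewrite eq_le; apply/andP; split; first exact: Psi_le1.
      apply: le_trans (Psi_ge_out hg1 hh1 nx).
      rewrite -(g1 x eix); exact: (@gs_ge X e (i, j) [:: (i, j)] x (mem_head _ _)).
    exists [:: jj], 1; split => // q hq.
    have := hq jj (mem_head _ _); rewrite psip ltr_distlC => /andP [_ hq1].
    have hq0 : 0 < psi jj q by lra.
    case: (Psi_gt (lexx 0) hq0) => [[z [nz gz]]|[z [y [gzy]]]].
      have [pp] := gs_pos gz; rewrite mem_seq1 => /eqP -> /= gij0.
      exists z; split => //; apply: clV; apply: subset_closure.
      by apply: contrapT => nz'; move: gij0; rewrite g0 // ltxx.
    by rewrite /= subrr mulr0 ltxx.
- by move=> p _; exists [::], 1.
- move=> A B hA hB p [/hA gA /hB gB].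
  have -> : @Dmap X @^-1` (A `&` B) = (@Dmap X @^-1` A) `&` (@Dmap X @^-1` B) by [].
  exact: gen_at_I.
- move=> F hF p [A FA Ap]; have [G [del [d0 H]]] := hF A FA p Ap.
  by exists G, del; split => // q /H Aq; exists A.
Qed.

Definition Ix := (Jt * bool)%type.
Definition phi (i : Ix) f := psi i.1 (if i.2 then ginv f else f).

Lemma lift_gen (b : bool) (U : set (Gamma X)) p :
  gen_at U (if b then ginv p else p) ->
  exists (F : seq Ix) (del : RR), 0 < del /\ forall q,
    (forall i, i \in F -> `|phi i q - phi i p| < del) -> U (if b then ginv q else q).
Proof.
move=> [F [del [d0 H]]]; exists [seq (j, b) | j <- F], del; split => // q hq.
apply: H => j jF; exact: (hq (j, b) (map_f _ jF)).
Qed.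

Lemma phigen U : @hco_subbase X U -> forall p, U p ->
  exists (F : seq Ix) (del : RR), 0 < del /\
    forall q, (forall i, i \in F -> `|phi i q - phi i p| < del) -> U q.
Proof.
move=> [[K [V [cK oV ->]]]|[[K [V [cK oV ->]]]|[[W [fW ->]]|[W [fW ->]]]]] p Up.
- have H := @lift_gen false _ _ (gen_hco cK oV Up).
  exact: H.
- have H := @lift_gen true (hco K V) p (@gen_hco K V (ginv p) cK oV Up).
  exact: H.
- exact: (@lift_gen false _ _ (gen_fell fW Up)).
- have Up' : W (Dmap (ginv p)) by rewrite Dmap_ginv.
  have [F [del [d0 H]]] := @lift_gen true (@Dmap X @^-1` W) _ (gen_fell fW Up').
  exists F, del; split => // q /H /=; by rewrite Dmap_ginv.
Qed.

Lemma graph_sub p q : (forall i, phi i p = phi i q) ->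
  forall x y, graph p (x, y) -> graph q (x, y).
Proof.
move=> E x y gxy.
have T (K V : set X) : compact K -> open V -> hco K V p -> hco K V q.
  move=> cK oV hp; have [F [del [d0 H]]] := gen_hco cK oV hp.
  apply: H => j _; have := E (j, false); rewrite /phi /= => ->.
  by rewrite subrr normr0.
have hx : hco [set x] setT p by split => // _ ->; exists y.
have [_ [y' gxy']] : hco [set x] setT q /\ pdom q x.
  have hq := T _ _ (@compact_set1 X x) openT hx; split => //.
  by case: hq => + _; apply.
case: (eqVneq y y') => [-> //|nyy].
have [A [oA yA y'A]] := hausdorff_accessible hX nyy.
have hA : hco [set x] A p.
  split; first by move=> _ ->; exists y.
  by move=> z [_ -> gz]; rewrite -(gfun gxy gz) -in_setE.
have [_ im] := T _ _ (@compact_set1 X x) oA hA.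
have : A y' by apply: im; exists x.
by move: y'A; rewrite in_setE.
Qed.

Lemma phisep p q : (forall i, phi i p = phi i q) -> p = q.
Proof.
move=> E.
have E' : forall i, phi i q = phi i p by move=> i; rewrite E.
have G : graph p = graph q.
  apply/seteqP; split => -[x y]; [exact: graph_sub E x y|exact: graph_sub E' x y].
move: G; case: p {E E'} => Gp hp; case: q => Gq hq /= G; subst Gq.
by congr MkGamma; exact: Prop_irrelevance.
Qed.

End GammaGen.

Lemma phicont (X : topologicalType) (lcX : locally_compact [set: X]) (hX : hausdorff_space X)
  (e : nat -> set X) (e_open : forall n, open (e n))
  (e_basis : forall x N, nbhs x N -> exists n, e n x /\ e n `<=` N) :
  forall (i : Ix) (p : Gamma X) (eps : RR), 0 < eps -> exists O,
  [/\ gen_open (@hco_subbase X) O, O p & forall q, O q -> `|phi e i q - phi e i p| < eps].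
Proof.
move=> [j b] p eps e0; rewrite /phi /=; case: b.
  have [O [tO Op hO]] := psi_cont lcX hX e j (ginv p) e0.
  exists (@ginv X @^-1` O); split; [exact: (ginv_open tO)|exact: Op|by move=> q /hO].
exact: (psi_cont lcX hX e j p e0).
Qed.

Theorem mainTheorem3 (X : topologicalType) :
  locally_compact [set: X] -> hausdorff_space X -> @second_countable X ->
  separable_sp (@tau_hco X) /\ metrizable_sp (@tau_hco X).
Proof.
move=> lcX hX [B cB [Bo Bb]].
have /countable_injP [fi fiinj] := cB.
pose e (n : nat) : set X := match pselect (exists U, B U /\ fi U = n) with
  | left h => projT1 (cid h) | right _ => set0 end.
have eB U : B U -> e (fi U) = U.
  move=> BU; rewrite /e; case: pselect => [h|h]; last by exfalso; apply: h; exists U.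
  have [BU' fU] := projT2 (cid h).
  by apply: fiinj; rewrite ?in_setE.
have e_open n : open (e n).
  rewrite /e; case: pselect => [h|_]; last exact: open0.
  by apply: Bo; have [] := projT2 (cid h).
have e_basis x N : nbhs x N -> exists n, e n x /\ e n `<=` N.
  move=> nN; have [U [BU Ux] UN] := Bb x N nN.
  by exists (fi U); rewrite eB.
exact: (@metric_main _ (@hco_subbase X) Ix (phi e)
  (fun i p => psi01 e i.1 _)
  (phicont lcX hX e_open e_basis)
  (phigen lcX hX e_open e_basis)
  (phisep lcX hX e_open e_basis)).
Qed.
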